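(* Let $\psi:[0,\infty)\to[0,\infty)$ be convex, nondecreasing, not identically zero, with $\psi(0)=0$, and for $L>0$ let $\Psi(z;L)=\exp\big(\frac{2}{L^2}\psi(Lz)\big)-1$. Suppose that for some $\tau>0$ and $L>0$ a random variable $Z$ satisfies $$P\Big(|Z|\ge \frac{\tau}{L}\,\psi^{-1}(L^2t/2)\Big)\le 2e^{-t}\quad\text{for all } t>0.$$ Then $\|Z\|_{\Psi(\cdot;\sqrt3L)}\le\sqrt3\,\tau$.
   Context: For $t>0$, $\psi^{-1}(t)$ is the unique $x\ge0$ with $\psi(x)=t$ (well defined since $\psi$ is continuous, unbounded and strictly increasing where positive). The Orlicz norm is $\|X\|_{\Psi}=\inf\{c>0:E\Psi(|X|/c)\le1\}$. *)

(* Defs.v *)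
From HB Require Import structures.
From mathcomp Require Import all_boot all_order all_algebra.
From mathcomp Require Import all_classical all_reals all_analysis.
Set Implicit Arguments. Unset Strict Implicit. Unset Printing Implicit Defensive.
Import Order.TTheory GRing.Theory Num.Theory.
Local Open Scope classical_set_scope.
Local Open Scope ring_scope.

Definition admissible_psi (R : realType) (psi : R -> R) : Prop :=
  [/\ (forall x, 0 <= x -> 0 <= psi x),
      (forall x y l, 0 <= x -> 0 <= y -> 0 <= l <= 1 ->
          psi (l * x + (1 - l) * y) <= l * psi x + (1 - l) * psi y),
      (forall x y, 0 <= x -> x <= y -> psi x <= psi y),
      (exists x, 0 <= x /\ psi x != 0) &
      psi 0 = 0].

Definition psi_inv (R : realType) (psi : R -> R) (t : R) : R :=
  xget 0 [set x | 0 <= x /\ psi x = t].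

Definition PsiL (R : realType) (psi : R -> R) (L z : R) : R :=
  expR (2 / L ^+ 2 * psi (L * z)) - 1.

Definition orlicz_norm (d : measure_display) (T : measurableType d) (R : realType)
  (P : probability T R) (Phi : R -> R) (X : T -> R) : \bar R :=
  ereal_inf [set c%:E | c in [set c : R | 0 < c /\
     (\int[P]_x (Phi (`|X x| / c))%:E <= 1)%E]].

(* Main.v *)
Require Import Defs.
From HB Require Import structures.
From mathcomp Require Import all_boot all_order all_algebra.
From mathcomp Require Import all_classical all_reals all_analysis.
From mathcomp Require Import ring lra measurable_realfun.
Import Order.TTheory GRing.Theory Num.Theory.
Import numFieldNormedType.Exports.
Local Open Scope classical_set_scope.
Local Open Scope ring_scope.

Section S.
Variable R : realType.

Lemma is_derive_inv (f : R -> R) (x v df : R) : f x != 0 -> is_derive x v f df ->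
  is_derive x v (fun y => (f y)^-1) (- (f x) ^- 2 *: df).
Proof.
move=> fx0 H; apply: DeriveDef; first exact: derivableV.
by rewrite deriveV // derive_val.
Qed.

Lemma is_derive_1x (x : R) : is_derive x 1 (fun y : R => 1 + y) 1.
Proof.
have := @is_deriveD R R R (cst 1) id x 1 0 1 _ _.
by rewrite add0r; apply.
Qed.

Lemma is_derive_F (x : R) : 0 <= x ->
  is_derive x 1 (fun y : R => - ((1 + y) ^+ 2)^-1) (2 / (1 + x) ^+ 3).
Proof.
move=> x0.
have x1 : 0 < 1 + x by rewrite ltr_wpDr.
have h2 := @is_deriveX R R (fun y : R => 1 + y) 2 x 1 1 (is_derive_1x x).
have h3 := @is_derive_inv ((fun y : R => 1 + y) ^+ 2) x 1 _ _ h2.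
have h4 := @is_deriveN R R R _ x 1 _ (h3 _).
have nz : ((fun y : R => 1 + y) ^+ 2) x != 0 by rewrite exprfctE expf_neq0 // gt_eqF.
have H := h4 nz.
have -> : (fun y : R => - ((1 + y) ^+ 2)^-1) = - (fun y : R => (((fun y : R => 1 + y) ^+ 2) y)^-1).
  by apply/funext => y /=; rewrite exprfctE.
apply: is_derive_eq.
rewrite exprfctE /=.
transitivity (- (- ((1+x)^+2)^-2 * (2 * (1 + x)))); first by rewrite [_%:A]mulr1.
have nz1 : 1 + x != 0 by rewrite gt_eqF.
by field.
Qed.

Lemma int_tail :
  (\int[lebesgue_measure]_(x in `[0%R, +oo[) (2 / (1 + x) ^+ 3 : R)%:E = 1)%E.
Proof.
have -> : (1 = 0%:E - (- ((1 + 0) ^+ 2)^-1)%:E :> \bar R)%E.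
  by rewrite addr0 expr1n invr1 -EFinB opprK add0r.
apply: (@ge0_continuous_FTC2y R (fun x : R => 2 / (1 + x) ^+ 3) (fun y : R => - ((1 + y) ^+ 2)^-1) 0 0).
- move=> x x0; apply: divr_ge0 => //; apply: exprn_ge0; exact: addr_ge0.
- apply: continuous_in_subspaceT => x; rewrite inE /= in_itv /= andbT => x0.
  have x1 : 0 < 1 + x by rewrite ltr_wpDr.
  have : derivable (fun y : R => 2 / (1 + y) ^+ 3) x 1.
    have h2 := @is_deriveX R R (fun y : R => 1 + y) 3 x 1 1 (is_derive_1x x).
    have nz : ((fun y : R => 1 + y) ^+ 3) x != 0 by rewrite exprfctE expf_neq0 // gt_eqF.
    have h3 := @is_derive_inv ((fun y : R => 1 + y) ^+ 3) x 1 _ nz h2.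
    have h4 := @is_deriveZ R R R _ 2 x 1 _ h3.
    have -> : (fun y : R => 2 / (1 + y) ^+ 3) = 2 *: (fun y : R => (((fun y : R => 1 + y) ^+ 3) y)^-1).
      by apply/funext => y /=; rewrite exprfctE.
    by case: h4.
  by move/derivable1_diffP/differentiable_continuous.
- rewrite -oppr0; apply: cvgN.
  apply/gtr0_cvgV0.
    near=> y.
    have y0 : 0 <= y by near: y; exists 0; split => // z /ltW.
    by apply: exprn_gt0; lra.
  apply/cvgryPge => A.
  near=> y.
  have y0 : 0 <= y by near: y; exists 0; split => // z /ltW.
  have Ay : A <= y by near: y; exists A; split; [exact: num_real | move=> z /ltW].
  rewrite expr2; nra.
- by move=> x x0; case: (is_derive_F x (ltW x0)).
- apply: cvg_at_right_filter.
  have H := is_derive_F 0 (lexx 0).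
  have : derivable (fun y : R => - ((1 + y) ^+ 2)^-1) 0 1 by case: H.
  by move/derivable1_diffP/differentiable_continuous.
- move=> x; rewrite in_itv /= andbT => x0.
  by have H := is_derive_F x (ltW x0); rewrite derive1E derive_val.
Unshelve. all: by end_near. Qed.


Lemma psi_inv_le (psi : R -> R) (s u : R) :
  (forall x y, 0 <= x -> x <= y -> psi x <= psi y) -> 0 <= u -> s < psi u ->
  psi_inv psi s <= u.
Proof.
move=> mono u0 su; rewrite /psi_inv.
case: xgetP => [x _ [x0 psix]|_] //.
rewrite leNgt; apply/negP => ux.
have := mono _ _ u0 (ltW ux); rewrite psix.
by rewrite leNgt su.
Qed.

Lemma meas_tail_fun :
  measurable_fun (`[0%R, +oo[ : set R) (EFin \o (fun x : R => 2 / (1 + x) ^+ 3)).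
Proof.
apply/measurable_EFinP.
pose g := fun x : R => 2 / (1 + Num.max x 0) ^+ 3.
have mg : measurable_fun setT g.
  apply: nonincreasing_measurable => // x y xy; rewrite /g.
  have h0 : 0 < 1 + Num.max x 0 by rewrite ltr_wpDr // le_max lexx orbT.
  have h1 : 0 < 1 + Num.max y 0 by rewrite ltr_wpDr // le_max lexx orbT.
  apply: ler_wpM2l => //.
  rewrite lef_pV2 ?posrE ?exprn_gt0 //; apply: lerXn2r; rewrite ?nnegrE; [exact: ltW|exact: ltW|].
  by rewrite lerD2l ge_max !le_max xy lexx !orbT.
apply: (eq_measurable_fun g) => [x|]; last exact: measurable_funTS.
rewrite inE /= in_itv /= andbT => x0.
by rewrite /g max_l.
Qed.
End S.

Theorem lemma17 (d : measure_display) (T : measurableType d) (R : realType)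
  (P : probability T R) (psi : R -> R) (tau L : R) (Z : {RV P >-> R}) :
  admissible_psi psi -> 0 < tau -> 0 < L ->
  (forall t : R, 0 < t ->
     (P [set x | (tau / L * psi_inv psi (L ^+ 2 * t / 2) <= `|Z x|)%R]
        <= (2 * expR (- t))%:E)%E) ->
  (orlicz_norm P (PsiL psi (Num.sqrt 3 * L)) Z <= (Num.sqrt 3 * tau)%:E)%E.
Proof.
move=> [psi0 _ psimono _ _] tau0 L0 Htail.
set s3 := Num.sqrt 3.
have s3gt0 : 0 < s3 by rewrite sqrtr_gt0.
have s3sq : s3 ^+ 2 = 3 by rewrite sqr_sqrtr.
set c := s3 * tau.
have c0 : 0 < c by rewrite mulr_gt0.
rewrite /orlicz_norm; apply: ereal_inf_lbound; exists c => //; split => //.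
pose phi := fun v : R => if 0 <= v then psi v else 0.
have phi0 v : 0 <= phi v by rewrite /phi; case: ifP => // /psi0.
have phimono : {homo phi : x y / x <= y}.
  move=> x y xy; rewrite /phi; case: ifPn => x0; case: ifPn => y0.
  - exact: psimono.
  - by move: y0; rewrite (le_trans x0 xy).
  - exact: psi0.
  - done.
have sL0 : 0 < s3 * L by rewrite mulr_gt0.
pose h := fun u : R => PsiL phi (s3 * L) (u / c).
have hmono : {homo h : x y / x <= y}.
  move=> x y xy; rewrite /h /PsiL lerD2r ler_expR; apply: ler_wpM2l.
    by apply: divr_ge0 => //; apply: exprn_ge0; apply: ltW.
  apply: phimono; apply: ler_wpM2l; first exact: ltW.
  by rewrite ler_pM2r ?invr_gt0.
have mZ : measurable_fun setT (fun x => `|Z x|).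
  apply: measurableT_comp; last exact: measurable_funPT.
  exact: normr_measurable.
have mY : measurable_fun setT (fun x => h `|Z x|).
  apply: (@measurableT_comp _ _ _ _ _ _ h); first exact: nondecreasing_measurable.
  apply: measurableT_comp; last exact: measurable_funPT.
  exact: normr_measurable.
pose Y : {RV P >-> R} := mfun_Sub (mem_set mY).
have YE x : Y x = h `|Z x| by [].
have k0 : 0 <= 2 / (s3 * L) ^+ 2 by apply: divr_ge0 => //; apply: exprn_ge0; apply: ltW.
have Yge0 x : 0 <= Y x.
  rewrite YE /h /PsiL subr_ge0.
  apply: le_trans (expR_ge1Dx _); rewrite lerDl.
  exact: mulr_ge0.
have arg0 x : 0 <= s3 * L * (`|Z x| / c).
  by apply: mulr_ge0; [exact: ltW|apply: divr_ge0 => //; exact: ltW].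
have -> : (\int[P]_x (PsiL psi (s3 * L) (`|Z x| / c))%:E =
           \int[P]_x (Y x)%:E)%E.
  apply: eq_integral => x _; rewrite YE /h /PsiL /phi ifT //.
rewrite -(@expectation_def _ _ _ P Y) ge0_expectation_ccdf //.
rewrite -(int_tail R).
apply: ge0_le_integral => //.
- exact: measurable_funTS (ccdf_measurable Y).
- exact: meas_tail_fun.
move=> r; rewrite /= in_itv /= andbT => r0.
have r1 : 0 < 1 + r by rewrite ltr_wpDr.
have mpre : measurable (Y @^-1` `]r, +oo[) by apply: measurable_funPTI.
rewrite /ccdf /distribution /pushforward /=.
have [r00|rpos] := eqVneq r 0.
  apply: le_trans (probability_le1 P mpre) _.
  by rewrite r00 lee_fin addr0 expr1n divr1 ler1n.
have {rpos}rpos : 0 < r by rewrite lt_def rpos r0.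
set t := 3 * ln (1 + r).
have t0 : 0 < t by rewrite mulr_gt0 // ln_gt0 // ltrDl.
set a := tau / L * psi_inv psi (L ^+ 2 * t / 2).
have mS : measurable [set x | a <= `|Z x|].
  have -> : [set x | a <= `|Z x|] = (fun x => `|Z x|) @^-1` `[a, +oo[.
    by apply/seteqP; split => x /=; rewrite in_itv /= andbT.
  rewrite -[X in measurable X]setTI.
  by apply: mZ.
apply: (@le_trans _ _ (P [set x | a <= `|Z x|])); last first.
  apply: le_trans (Htail t t0) _.
  rewrite lee_fin /t expRN expRM_natl lnK ?posrE //.
  apply: le_measure; rewrite ?inE //.
  move=> x /=; rewrite in_itv /= andbT => rY.
  rewrite /h /PsiL /phi ifT ?arg0 // in rY.
  have e1 : ln (1 + r) < 2 / (s3 * L) ^+ 2 * psi (s3 * L * (`|Z x| / c)).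
    by rewrite -ltr_expR lnK ?posrE //; lra.
  have e2 : L ^+ 2 * t / 2 < psi (s3 * L * (`|Z x| / c)).
    move: e1; rewrite exprMn s3sq /t.
    set l := ln (1 + r); set p := psi _ => e1.
    have q0 : 0 < L ^+ 2 by apply: exprn_gt0.
    have : 3 * L ^+ 2 / 2 * l < 3 * L ^+ 2 / 2 * (2 / (3 * L ^+ 2) * p).
      by rewrite ltr_pM2l // divr_gt0 // mulr_gt0.
    have -> : 3 * L ^+ 2 / 2 * (2 / (3 * L ^+ 2) * p) = p.
      by field; rewrite gt_eqF.
    suff -> : L ^+ 2 * (3 * l) / 2 = 3 * L ^+ 2 / 2 * l by [].
    by ring.
  have H := @psi_inv_le R psi _ _ psimono (arg0 x) e2.
  rewrite /a; apply: le_trans (ler_wpM2l _ H) _.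
    by apply: divr_ge0; apply: ltW.
  have -> : tau / L * (s3 * L * (`|Z x| / c)) = `|Z x|.
    rewrite /c; field.
    by rewrite !gt_eqF.
  by [].
Qed.
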